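(* Let $\mathcal{C}$ be a small category and $k$ a field. Then the trivial module $\underline{k}$ is a direct summand of $\mathrm{Res}_\tau(k\mathcal{C})$ as $kF(\mathcal{C})$-modules; i.e. $\mathrm{Res}_\tau(k\mathcal{C})\cong\underline{k}\oplus N_{\mathcal{C}}$ for some $kF(\mathcal{C})$-module $N_{\mathcal{C}}$.
   Context: Modules over a category algebra are identified with covariant functors to $\mathrm{Vect}_k$; $\underline{k}$ is the constant functor with value $k$. $\mathcal{C}^e=\mathcal{C}\times\mathcal{C}^{op}$, and $k\mathcal{C}$ is the functor $\mathcal{C}^e\to\mathrm{Vect}_k$ with $k\mathcal{C}(x,y)=k\mathrm{Hom}_{\mathcal{C}}(y,x)$ (zero if empty), $(u,v^{op})$ acting by $\alpha\mapsto u\alpha v$. The category of factorizations $F(\mathcal{C})$ has objects $[\alpha]$, $\alpha\in\mathrm{Mor}\,\mathcal{C}$; for $\alpha:y\to x$, $\alpha':y'\to x'$ a morphism $[\alpha]\to[\alpha']$ is a pair $(u,v^{op})$ with $u:x\to x'$, $v:y'\to y$ and $\alpha'=u\alpha v$. $\tau:F(\mathcal{C})\to\mathcal{C}^e$ sends $[\alpha]\mapsto(x,y)$ and $(u,v^{op})\mapsto(u,v^{op})$, and $\mathrm{Res}_\tau$ is precomposition with $\tau$. *)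

(* Defs.v *)
From HB Require Import structures.
From mathcomp Require Import all_boot all_algebra.
From mathcomp Require Import boolp finmap.
From mathcomp.multinomials Require Import monalg.

Set Implicit Arguments.
Unset Strict Implicit.
Unset Printing Implicit Defensive.

Import GRing.Theory.
Local Open Scope ring_scope.

Record category := Category {
  Ob : Type;
  Hom : Ob -> Ob -> Type;
  idm : forall a, Hom a a;
  comp : forall a b c, Hom b c -> Hom a b -> Hom a c;
  comp1m : forall a b (f : Hom a b), comp (idm b) f = f;
  compm1 : forall a b (f : Hom a b), comp f (idm a) = f;
  compA : forall a b c d (h : Hom c d) (g : Hom b c) (f : Hom a b),
      comp h (comp g f) = comp (comp h g) f
}.
Arguments Hom : clear implicits.
Arguments idm {C} a : rename.
Arguments comp {C a b c} g f : rename.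

(* Hom-sets as choiceTypes (classically, every set is one). *)
Definition hom (C : category) (a b : Ob C) : Type := Hom C a b.
Arguments hom : clear implicits.
HB.instance Definition _ (C : category) a b := gen_eqMixin (hom C a b).
HB.instance Definition _ (C : category) a b := gen_choiceMixin (hom C a b).

Record functor (D E : category) := Functor {
  fob : Ob D -> Ob E;
  fmor : forall a b, Hom D a b -> Hom E (fob a) (fob b);
  fmor_id : forall a, fmor (idm a) = idm (fob a);
  fmor_comp : forall a b c (g : Hom D b c) (f : Hom D a b),
      fmor (comp g f) = comp (fmor g) (fmor f)
}.
Arguments fmor {D E} F {a b} f : rename.

(* Modules over the category algebra kD = covariant functors D -> Vect_k.
   The data of such a functor: *)
Record premodule (k : fieldType) (D : category) := PreModule {
  mob : Ob D -> lmodType k;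
  mmor : forall a b, Hom D a b -> mob a -> mob b
}.
Arguments mmor {k D} M {a b} f x : rename.

Definition is_module (k : fieldType) (D : category) (M : premodule k D) : Prop :=
  [/\ (forall a b (f : Hom D a b), linear (mmor M f)),
      (forall a (x : mob M a), mmor M (idm a) x = x) &
      (forall a b c (g : Hom D b c) (f : Hom D a b) (x : mob M a),
          mmor M (comp g f) x = mmor M g (mmor M f x))].

Definition mod_iso (k : fieldType) (D : category) (M N : premodule k D) : Prop :=
  exists phi : forall a, mob M a -> mob N a,
    [/\ (forall a, linear (phi a)),
        (forall a, bijective (phi a)) &
        (forall a b (f : Hom D a b) (x : mob M a),
            phi b (mmor M f x) = mmor N f (phi a x))].

Definition dsum (k : fieldType) (D : category) (M N : premodule k D) :
    premodule k D :=
  @PreModule k D (fun a => (mob M a * mob N a)%type)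
    (fun a b f x => (mmor M f x.1, mmor N f x.2)).

Definition trivial_mod (k : fieldType) (D : category) : premodule k D :=
  @PreModule k D (fun _ => k^o) (fun _ _ _ x => x).

Definition Res (k : fieldType) (D E : category) (F : functor D E)
    (M : premodule k E) : premodule k D :=
  @PreModule k D (fun a => mob M (fob F a)) (fun a b f x => mmor M (fmor F f) x).

Section Envelope.
Variable C : category.

Definition env_hom (p q : Ob C * Ob C) : Type :=
  (Hom C p.1 q.1 * Hom C q.2 p.2)%type.

Definition env_id (p : Ob C * Ob C) : env_hom p p := (idm p.1, idm p.2).

Definition env_comp (p q r : Ob C * Ob C) (g : env_hom q r) (f : env_hom p q) :
    env_hom p r := (comp g.1 f.1, comp f.2 g.2).

Lemma env_comp1m p q (f : env_hom p q) : env_comp (env_id q) f = f.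
Proof. by case: f => u v; rewrite /env_comp /= comp1m compm1. Qed.

Lemma env_compm1 p q (f : env_hom p q) : env_comp f (env_id p) = f.
Proof. by case: f => u v; rewrite /env_comp /= comp1m compm1. Qed.

Lemma env_compA p q r s (h : env_hom r s) (g : env_hom q r) (f : env_hom p q) :
  env_comp h (env_comp g f) = env_comp (env_comp h g) f.
Proof. by rewrite /env_comp /= !compA. Qed.

Definition envelope : category :=
  @Category (Ob C * Ob C)%type env_hom env_id env_comp
    env_comp1m env_compm1 env_compA.

End Envelope.

(* kC as a kC^e-module: (x, y) |-> k Hom_C(y, x), the free k-vector space
   on Hom_C(y, x) (zero if empty); (u, v^op) acts by alpha |-> u alpha v,
   extended linearly. *)
Definition kC_ob (k : fieldType) (C : category) (p : Ob C * Ob C) : lmodType k :=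
  {malg k[hom C p.2 p.1]}.

Definition kC_mor (k : fieldType) (C : category) (p q : Ob C * Ob C)
    (f : env_hom p q) (g : kC_ob k p) : kC_ob k q :=
  \sum_(a <- (msupp g : seq _)) << g@_a *g (comp f.1 (comp a f.2) : hom C q.2 q.1) >>.

Definition kC (k : fieldType) (C : category) : premodule k (envelope C) :=
  @PreModule k (envelope C) (kC_ob k (C := C)) (@kC_mor k C).

Section Factorizations.
Variable C : category.

Record fobj := FObj { fx : Ob C; fy : Ob C; farr : hom C fy fx }.

Definition fhom (A B : fobj) : Type :=
  {p : (hom C (fx A) (fx B) * hom C (fy B) (fy A))%type |
     farr B == (comp p.1 (comp (farr A) p.2) : hom C _ _)}.

Lemma fid_proof (A : fobj) :
  farr A == (comp (idm (fx A)) (comp (farr A) (idm (fy A))) : hom C _ _).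
Proof. by rewrite comp1m compm1. Qed.

Definition fid (A : fobj) : fhom A A :=
  exist _ (idm (fx A) : hom C _ _, idm (fy A) : hom C _ _) (fid_proof A).

Lemma fcomp_proof (A B E : fobj) (g : fhom B E) (f : fhom A B) :
  farr E == (comp (comp (sval g).1 (sval f).1)
                  (comp (farr A) (comp (sval f).2 (sval g).2)) : hom C _ _).
Proof.
case: g => [[u' v'] /= /eqP ->]; case: f => [[u v] /= /eqP ->].
by rewrite !compA.
Qed.

Definition fcomp (A B E : fobj) (g : fhom B E) (f : fhom A B) : fhom A E :=
  exist _ (comp (sval g).1 (sval f).1 : hom C _ _,
           comp (sval f).2 (sval g).2 : hom C _ _) (fcomp_proof g f).

Lemma fcomp1m A B (f : fhom A B) : fcomp (fid B) f = f.
Proof. by apply: val_inj; case: f => [[u v] ?] /=; rewrite comp1m compm1. Qed.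

Lemma fcompm1 A B (f : fhom A B) : fcomp f (fid A) = f.
Proof. by apply: val_inj; case: f => [[u v] ?] /=; rewrite comp1m compm1. Qed.

Lemma fcompA A B E G (h : fhom E G) (g : fhom B E) (f : fhom A B) :
  fcomp h (fcomp g f) = fcomp (fcomp h g) f.
Proof. by apply: val_inj => /=; rewrite !compA. Qed.

Definition factorizations : category :=
  @Category fobj fhom fid fcomp fcomp1m fcompm1 fcompA.

Definition tau_ob (A : fobj) : Ob (envelope C) := (fx A, fy A).
Definition tau_mor (A B : fobj) (f : fhom A B) :
    Hom (envelope C) (tau_ob A) (tau_ob B) := sval f.

Lemma tau_id A : tau_mor (fid A) = idm (tau_ob A).
Proof. by []. Qed.

Lemma tau_comp A B E (g : fhom B E) (f : fhom A B) :
  tau_mor (fcomp g f) = comp (tau_mor g) (tau_mor f).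
Proof. by []. Qed.

Definition tau : functor factorizations (envelope C) :=
  @Functor factorizations (envelope C) tau_ob tau_mor tau_id tau_comp.

End Factorizations.

(* Main.v *)
Require Import Defs.
From HB Require Import structures.
From mathcomp Require Import all_boot all_algebra.
From mathcomp Require Import finmap.
From mathcomp.multinomials Require Import monalg.
Import Defs.
Set Implicit Arguments.
Unset Strict Implicit.
Unset Printing Implicit Defensive.
Import GRing.Theory.
Local Open Scope ring_scope.
Section L.
Variable k : fieldType.

Definition Lm (K1 K2 : choiceType) (phi : K1 -> K2) (g : {malg k[K1]}) : {malg k[K2]} :=
  \sum_(a <- msupp g) << g@_a *g phi a >>.

Lemma Lw (K1 K2 : choiceType) (phi : K1 -> K2) (d : {fset K1}) g :
  (msupp g `<=` d)%fset -> Lm phi g = \sum_(a <- d) << g@_a *g phi a >>.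
Proof.
move=> sub; rewrite /Lm; apply: big_fset_incl => // a _ na.
by rewrite mcoeff_outdom // monalgU0.
Qed.

Lemma LD (K1 K2 : choiceType) (phi : K1 -> K2) g1 g2 :
  Lm phi (g1 + g2) = Lm phi g1 + Lm phi g2.
Proof.
rewrite (@Lw _ _ _ (msupp g1 `|` msupp g2)%fset _ (msuppD_le _ _)).
rewrite (@Lw _ _ _ (msupp g1 `|` msupp g2)%fset g1 (fsubsetUl _ _)).
rewrite (@Lw _ _ _ (msupp g1 `|` msupp g2)%fset g2 (fsubsetUr _ _)).
by rewrite -big_split /=; apply: eq_bigr => a _; rewrite mcoeffD monalgUD.
Qed.

Lemma malgUZ (K : choiceType) (c x : k) (a : K) : << c * x *g a >> = c *: << x *g a >>.
Proof. by apply/malgP => b; rewrite mcoeffZ !mcoeffU mulrnAr. Qed.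

Lemma LZ (K1 K2 : choiceType) (phi : K1 -> K2) c g :
  Lm phi (c *: g) = c *: Lm phi g.
Proof.
rewrite (@Lw _ _ _ (msupp g) _ (msuppZ_le _ _)) /Lm scaler_sumr.
by apply: eq_bigr => a _; rewrite mcoeffZ malgUZ.
Qed.

Lemma Llin (K1 K2 : choiceType) (phi : K1 -> K2) : linear (Lm phi).
Proof. by move=> c u v; rewrite LD LZ. Qed.

Lemma L0 (K1 K2 : choiceType) (phi : K1 -> K2) : Lm phi 0 = 0.
Proof. by rewrite /Lm msupp0 big_seq_fset0. Qed.

Lemma LU (K1 K2 : choiceType) (phi : K1 -> K2) c a :
  Lm phi << c *g a >> = << c *g phi a >>.
Proof.
rewrite (@Lw _ _ _ [fset a]%fset _ msuppU_le) big_seq_fset1.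
by rewrite mcoeffUU.
Qed.

Lemma Lsum (K1 K2 : choiceType) (phi : K1 -> K2) (I : Type) (s : seq I) (F : I -> {malg k[K1]}) :
  Lm phi (\sum_(a <- s) F a) = \sum_(a <- s) Lm phi (F a).
Proof.
elim: s => [|a s IH]; first by rewrite !big_nil L0.
by rewrite !big_cons LD IH.
Qed.

Lemma Lcomp (K1 K2 K3 : choiceType) (phi : K1 -> K2) (psi : K2 -> K3) g :
  Lm psi (Lm phi g) = Lm (fun a => psi (phi a)) g.
Proof. by rewrite [Lm phi g]/Lm Lsum [in RHS]/Lm; apply: eq_bigr => a _; rewrite LU. Qed.

Lemma Lext (K1 K2 : choiceType) (phi psi : K1 -> K2) g :
  (forall a, phi a = psi a) -> Lm phi g = Lm psi g.
Proof. by move=> e; rewrite /Lm; apply: eq_bigr => a _; rewrite e. Qed.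

Lemma Lid (K1 : choiceType) g : Lm (fun a : K1 => a) g = g.
Proof. by rewrite /Lm -monalgE. Qed.

Definition eps (K : choiceType) (g : {malg k[K]}) : k := (Lm (fun _ => tt) g)@_tt.

Lemma epsD (K : choiceType) (g1 g2 : {malg k[K]}) : eps (g1 + g2) = eps g1 + eps g2.
Proof. by rewrite /eps LD mcoeffD. Qed.
Lemma epsZ (K : choiceType) c (g : {malg k[K]}) : eps (c *: g) = c * eps g.
Proof. by rewrite /eps LZ mcoeffZ. Qed.
Lemma epsU (K : choiceType) c (a : K) : eps << c *g a >> = c.
Proof. by rewrite /eps LU mcoeffUU. Qed.
Lemma epsL (K1 K2 : choiceType) (phi : K1 -> K2) g : eps (Lm phi g) = eps g.
Proof. by rewrite /eps Lcomp. Qed.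
Lemma eps0 (K : choiceType) : eps (0 : {malg k[K]}) = 0.
Proof. by rewrite /eps L0 mcoeff0. Qed.
End L.
Section Ker.
Variables (k : fieldType) (K : choiceType).
Definition Nob := {g : {malg k[K]} | eps g == 0}.
HB.instance Definition _ := Choice.on Nob.

Lemma N0_proof : eps (0 : {malg k[K]}) == 0. Proof. by rewrite eps0. Qed.
Definition Nzero : Nob := exist _ 0 N0_proof.
Lemma Nopp_proof (x : Nob) : eps (- val x) == 0.
Proof. by rewrite -scaleN1r epsZ (eqP (valP x)) mulr0. Qed.
Definition Nopp (x : Nob) : Nob := exist (fun g : {malg k[K]} => eps g == 0) _ (Nopp_proof x).
Lemma Nadd_proof (x y : Nob) : eps (val x + val y) == 0.
Proof. by rewrite epsD (eqP (valP x)) (eqP (valP y)) addr0. Qed.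
Definition Nadd (x y : Nob) : Nob := exist (fun g : {malg k[K]} => eps g == 0) _ (Nadd_proof x y).
Lemma Nscale_proof c (x : Nob) : eps (c *: val x) == 0.
Proof. by rewrite epsZ (eqP (valP x)) mulr0. Qed.
Definition Nscale c (x : Nob) : Nob := exist (fun g : {malg k[K]} => eps g == 0) _ (Nscale_proof c x).

Lemma NaddA : associative Nadd.
Proof. by move=> x y z; apply: val_inj; rewrite /= addrA. Qed.
Lemma NaddC : commutative Nadd.
Proof. by move=> x y; apply: val_inj; rewrite /= addrC. Qed.
Lemma Nadd0 : left_id Nzero Nadd.
Proof. by move=> x; apply: val_inj; rewrite /= add0r. Qed.
Lemma NaddN : left_inverse Nzero Nopp Nadd.
Proof. by move=> x; apply: val_inj; rewrite /= addNr. Qed.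

HB.instance Definition _ := GRing.isZmodule.Build Nob NaddA NaddC Nadd0 NaddN.

Lemma NscaleA a b (v : Nob) : Nscale a (Nscale b v) = Nscale (a * b) v.
Proof. by apply: val_inj; rewrite /= scalerA. Qed.
Lemma Nscale1 : left_id 1 Nscale.
Proof. by move=> x; apply: val_inj; rewrite /= scale1r. Qed.
Lemma NscaleDr : right_distributive Nscale +%R.
Proof. by move=> a x y; apply: val_inj; rewrite /= scalerDr. Qed.
Lemma NscaleDl v : {morph Nscale^~ v : a b / a + b}.
Proof. by move=> a b; apply: val_inj; rewrite /= scalerDl. Qed.

HB.instance Definition _ := GRing.Zmodule_isLmodule.Build k Nob NscaleA Nscale1 NscaleDr NscaleDl.

Lemma NvalD (x y : Nob) : val (x + y) = val x + val y. Proof. by []. Qed.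
Lemma NvalZ c (x : Nob) : val (c *: x) = c *: val x. Proof. by []. Qed.
End Ker.
Section Main.
Variables (C : category) (k : fieldType).

Lemma kC_morE (p q : Ob C * Ob C) (f : env_hom p q) (g : kC_ob k p) :
  kC_mor f g = Lm (fun a : hom C p.2 p.1 => (comp f.1 (comp a f.2) : hom C q.2 q.1)) g.
Proof. by []. Qed.

Definition NK (A : fobj C) : choiceType := hom C (fy A) (fx A).

Lemma Nmor_proof (A B : fobj C) (f : fhom A B) (x : Nob k (NK A)) :
  eps (kC_mor (tau_mor f) (val x) : {malg k[NK B]}) == 0.
Proof. by rewrite kC_morE epsL (valP x). Qed.

Definition Nmod : premodule k (factorizations C) :=
  @PreModule k (factorizations C) (fun A => Nob k (NK A))
    (fun A B f x => exist (fun g : {malg k[NK B]} => eps g == 0) _ (Nmor_proof f x)).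

Lemma Nmod_is_module : is_module Nmod.
Proof.
split.
- by move=> A B f c x y; apply: val_inj; rewrite /= !kC_morE Llin.
- move=> A x; apply: val_inj; rewrite /= kC_morE -[RHS]Lid; apply: Lext => a.
  by rewrite /= comp1m compm1.
- move=> A B E g f x; apply: val_inj; rewrite /= !kC_morE Lcomp; apply: Lext => a.
  by rewrite /= !compA.
Qed.

Lemma phi_proof (A : fobj C) (g : {malg k[NK A]}) :
  eps (g - eps g *: << farr A >>) == 0.
Proof. by rewrite epsD -scaleNr epsZ epsU mulr1 subrr. Qed.

Definition phi (A : fobj C) (g : {malg k[NK A]}) : (k^o * Nob k (NK A))%type :=
  (eps g, exist (fun g : {malg k[NK A]} => eps g == 0) _ (phi_proof g)).

Definition psi (A : fobj C) (x : (k^o * Nob k (NK A))%type) : {malg k[NK A]} :=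
  val x.2 + x.1 *: << farr A >>.

Lemma iso : mod_iso (Res (tau C) (kC k C)) (dsum (trivial_mod k (factorizations C)) Nmod).
Proof.
exists phi; split.
- move=> A c x y; rewrite /phi; congr pair.
    by rewrite /= epsD epsZ.
  apply: val_inj; rewrite /= epsD epsZ.
  by rewrite scalerDl scalerBr scalerA opprD addrACA.
- move=> A; exists (@psi A).
    by move=> g; rewrite /psi /= subrK.
  move=> [c [n hn]]; rewrite /psi /phi /=; congr pair.
    by rewrite epsD epsZ epsU (eqP hn) add0r mulr1.
  apply: val_inj => /=.
  by rewrite epsD epsZ epsU (eqP hn) add0r mulr1 addrK.
- move=> A B f x; rewrite /phi /=; congr pair.
    by rewrite kC_morE epsL.
  apply: val_inj => /=; rewrite !kC_morE epsL -!scaleNr LD LZ LU.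
  by case: f => [[u v] /= /eqP ->] /=.
Qed.

Theorem main_thm :
  exists N : premodule k (factorizations C),
    is_module N /\
    mod_iso (Res (tau C) (kC k C)) (dsum (trivial_mod k (factorizations C)) N).
Proof. exists Nmod; split; [exact: Nmod_is_module | exact: iso]. Qed.
End Main.

Theorem lemma2p3p3 (C : category) (k : fieldType) :
  exists N : premodule k (factorizations C),
    is_module N /\
    mod_iso (Res (tau C) (kC k C)) (dsum (trivial_mod k (factorizations C)) N).
Proof. exact: main_thm. Qed.
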